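(* Let $k\ge2$ and $T\in\mathcal{GT}_k(n)$ with labelling $s$, and suppose $\omega_k(T)\preceq\omega_{k-1}(T)$. Then $s((k-1)1^-)=0$.
   Context: Type $C$ setting: $C_n=\{1<\cdots<n<\overline n<\cdots<\overline1\}$; a column is a strictly increasing word; $N_z(u)$ counts letters $x\le z$ or $x\ge\overline z$; admissible columns are nonempty columns with $N_z(u)\le z$ for all $z$. For admissible columns $c=x_1\cdots x_k$, $d=y_1\cdots y_l$, $c\preceq d$ iff $k\ge l$, $x_i\le y_i$ for $i\le l$, and there are no $1\le a\le b\le n$ and $1\le p\le q<r\le s\le l$ with ($x_p=a,y_q=b,y_r=\overline b,y_s=\overline a$ or $x_p=a,x_q=b,x_r=\overline b,y_s=\overline a$) and $(s-r)+(q-p)\ge b-a$. $\mathrm{ACol}(C_n)$ is the set of admissible columns plus a symbol $\epsilon$, and $\preceq$ is extended by $c\preceq\epsilon$ for all $c$, $\epsilon\not\preceq c$ for $c\ne\epsilon$. Blocks: $\mathfrak{c}(m)=12\cdots m$; $\mathfrak{c}(a,b)=(a+1)\cdots(a+b)$; $\mathfrak{c}(\overline a,c)=\overline a\cdots\overline{a-c+1}$ (empty when $b=0$ resp. $c=0$). $C$-trees: vertices $i$ ($i\ge1$), $im$ (outer), $im^-$ (inner) for $i,m\ge1$; $i$ has level $i$, $im,im^-$ level $i+m$; strand $i$ ordered $i<i1<i1^-<i2<\cdots$. A labelling of rank $k$ is $s$ from vertices of level $\le k$ to $\mathbb N$; valuation $q(v)=s(i)+\sum_{im\le v}s(im)-\sum_{im^-\le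 v}s(im^-)$ for $v$ on strand $i$; $n$-labelling if $0\le q\le n$. $\rho(i)=\mathfrak{c}(s(i))$; $\rho(im)=\mathfrak{c}(q(v'),s(im))$ with $v'$ the predecessor of $im$ on its strand; $\rho(im^-)=\mathfrak{c}(\overline{q(im)},s(im^-))$. Level reading $\omega_t(T)=\rho(t)\rho((t-1)1)\cdots\rho(1(t-1))\rho(1(t-1)^-)\cdots\rho((t-1)1^-)$, or $\epsilon$ if empty. $\mathcal{GT}_k(n)$: $n$-labellings of rank $k$ with each $\omega_t$ ($t\le k$) equal to $\epsilon$ or an admissible column. *)

(* Defs.v *)
From HB Require Import structures.
From mathcomp Require Import all_boot all_order all_algebra.
Set Implicit Arguments. Unset Strict Implicit. Unset Printing Implicit Defensive.
Import GRing.Theory Num.Theory.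

(* [Pos i] is the letter i, [Neg i] is the letter bar i.  A letter belongs to
   C_n iff its index lies in 1..n. *)
Inductive letter := Pos of nat | Neg of nat.

Definition letter_code (x : letter) : nat + nat :=
  match x with Pos i => inl i | Neg i => inr i end.
Definition code_letter (c : nat + nat) : letter :=
  match c with inl i => Pos i | inr i => Neg i end.
Lemma letter_codeK : cancel letter_code code_letter. Proof. by case. Qed.
HB.instance Definition _ := Equality.copy letter (can_type letter_codeK).

Definition in_Cn (n : nat) (x : letter) : bool :=
  match x with Pos i | Neg i => (1 <= i <= n)%N end.

Definition ltl (x y : letter) : bool :=
  match x, y with
  | Pos i, Pos j => (i < j)%N
  | Pos _, Neg _ => true
  | Neg _, Pos _ => false
  | Neg i, Neg j => (j < i)%N
  end.
Definition lel (x y : letter) : bool := (x == y) || ltl x y.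

Definition is_column (u : seq letter) : bool := sorted ltl u.

(* N_z(u) : number of letters x of u with x <= z or x >= bar z *)
Definition Nz (z : nat) (u : seq letter) : nat :=
  count (fun x => match x with Pos i | Neg i => (i <= z)%N end) u.

Definition admissible (n : nat) (u : seq letter) : Prop :=
  [/\ u != [::], all (in_Cn n) u, is_column u &
      forall z : nat, (1 <= z <= n)%N -> (Nz z u <= z)%N].

Definition col_preceq (n : nat) (c d : seq letter) : Prop :=
  let x i := nth (Pos 0) c i.-1 in
  let y i := nth (Pos 0) d i.-1 in
  [/\ (size d <= size c)%N,
      (forall i, (1 <= i <= size d)%N -> lel (x i) (y i)) &
      ~ (exists a b p q r s : nat,
           [/\ [/\ (1 <= a)%N, (a <= b)%N & (b <= n)%N],
               [/\ (1 <= p)%N, (p <= q)%N, (q < r)%N, (r <= s)%N & (s <= size d)%N],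
               ((x p = Pos a /\ y q = Pos b /\ y r = Neg b /\ y s = Neg a) \/
                (x p = Pos a /\ x q = Pos b /\ x r = Neg b /\ y s = Neg a)) &
               (b - a <= (s - r) + (q - p))%N])].

(* ACol(C_n) = admissible columns plus epsilon; epsilon is [None]. *)
Definition acol_preceq (n : nat) (c d : option (seq letter)) : Prop :=
  match c, d with
  | Some c', Some d' => col_preceq n c' d'
  | _, None => True
  | None, Some _ => False
  end.

Definition acol_ok (n : nat) (c : option (seq letter)) : Prop :=
  match c with None => True | Some u => admissible n u end.

(* vertices: [Root i] = i, [Out i m] = im (outer), [Inn i m] = im^- (inner),
   valid when i, m >= 1 *)
Inductive vertex := Root of nat | Out of nat & nat | Inn of nat & nat.

Definition valid_vertex (v : vertex) : bool :=
  match v with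
  | Root i => (1 <= i)%N
  | Out i m | Inn i m => (1 <= i)%N && (1 <= m)%N
  end.

Definition level (v : vertex) : nat :=
  match v with Root i => i | Out i m | Inn i m => i + m end.

(* a labelling of rank k is a map s defined on the vertices of level <= k;
   we encode it as a total map, only its values on valid vertices of level
   <= k being relevant. *)
Definition labelling := vertex -> nat.

Definition qval (s : labelling) (v : vertex) : int :=
  match v with
  | Root i => (s (Root i))%:Z
  | Out i m => (s (Root i))%:Z + (\sum_(1 <= j < m.+1) (s (Out i j))%:Z)
                 - (\sum_(1 <= j < m) (s (Inn i j))%:Z)
  | Inn i m => (s (Root i))%:Z + (\sum_(1 <= j < m.+1) (s (Out i j))%:Z)
                 - (\sum_(1 <= j < m.+1) (s (Inn i j))%:Z)
  end.

Definition n_labelling (n k : nat) (s : labelling) : Prop :=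
  forall v, valid_vertex v -> (level v <= k)%N ->
    (0 <= qval s v)%R /\ (qval s v <= n%:Z)%R.

Definition blk (m : nat) : seq letter := map Pos (iota 1 m).
Definition blk_up (a b : nat) : seq letter := map Pos (iota a.+1 b).
Definition blk_bar (a c : nat) : seq letter :=
  map (fun j => Neg (a - j)) (iota 0 c).

Definition pred_out (i m : nat) : vertex :=
  if m == 1%N then Root i else Inn i m.-1.

(* the nonnegative valuation as a natural number (q >= 0 for n-labellings) *)
Definition qnat (s : labelling) (v : vertex) : nat := `|qval s v|%N.

Definition rho (s : labelling) (v : vertex) : seq letter :=
  match v with
  | Root i => blk (s (Root i))
  | Out i m => blk_up (qnat s (pred_out i m)) (s (Out i m))
  | Inn i m => blk_bar (qnat s (Out i m)) (s (Inn i m))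
  end.

Definition level_word (s : labelling) (t : nat) : seq letter :=
  rho s (Root t)
  ++ flatten [seq rho s (Out (t - j) j) | j <- iota 1 t.-1]
  ++ flatten [seq rho s (Inn i (t - i)) | i <- iota 1 t.-1].

Definition omega (s : labelling) (t : nat) : option (seq letter) :=
  let w := level_word s t in if w == [::] then None else Some w.

Definition in_GT (k n : nat) (s : labelling) : Prop :=
  n_labelling n k s /\
  forall t, (1 <= t <= k)%N -> acol_ok n (omega s t).

(* Main.v *)
Require Import Defs.
From mathcomp Require Import all_boot all_order all_algebra.
From mathcomp Require Import zify.
Import GRing.Theory Num.Theory.

Lemma eqPos j m : (Pos j == Pos m) = (j == m).
Proof. by apply/eqP/eqP => [[]|->]. Qed.
Lemma eqNegPos j m : (Neg j == Pos m) = false.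
Proof. by apply/eqP. Qed.

Lemma ltl_trans : transitive ltl.
Proof.
move=> y x z; case: x => i; case: y => j; case: z => m //=; lia.
Qed.

Lemma qnat_root s i : qnat s (Root i) = s (Root i).
Proof. by []. Qed.

Lemma qnat_out1 s i : qnat s (Out i 1) = (s (Root i) + s (Out i 1))%N.
Proof.
rewrite /qnat /= big_nat1 big_geq // subr0 -PoszD absz_nat //.
Qed.

Lemma qval_out1 s i : qval s (Out i 1) = Posz (s (Root i) + s (Out i 1))%N.
Proof. by rewrite /= big_nat1 big_geq // subr0 -PoszD. Qed.

Lemma qval_inn1 s i : qval s (Inn i 1) =
  (Posz (s (Root i) + s (Out i 1))%N - Posz (s (Inn i 1)))%R.
Proof. by rewrite /= !big_nat1 -PoszD. Qed.

Theorem proposition6p2 (n k : nat) (s : labelling) :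
  (2 <= k)%N -> in_GT k n s ->
  acol_preceq n (omega s k) (omega s k.-1) ->
  s (Inn k.-1 1) = 0%N.
Proof.
case: k => [|K] //= hK [Hn Hadm] Hpre.
have K1 : (1 <= K)%N by lia.
set a := s (Root K) in Hpre *; set b := s (Out K 1); set c := s (Inn K 1).
apply/eqP; rewrite -leqn0 leqNgt; apply/negP => c1.
set x := level_word s K.+1.
set y := level_word s K.
have vO : valid_vertex (Out K 1) by rewrite /= andbT.
have vI : valid_vertex (Inn K 1) by rewrite /= andbT.
have lO : (level (Out K 1) <= K.+1)%N by rewrite /= addn1.
have lI : (level (Inn K 1) <= K.+1)%N by rewrite /= addn1.
have [_ Hab] := Hn _ vO lO.
rewrite qval_out1 -/a -/b lez_nat in Hab.
have [Hc _] := Hn _ vI lI.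
rewrite qval_inn1 -/a -/b -/c subr_ge0 lez_nat in Hc.
have memO : forall l, l \in rho s (Out K 1) -> l \in x.
  move=> l Hl; rewrite /x /level_word !mem_cat; apply/orP; right; apply/orP; left.
  apply/flatten_mapP; exists 1%N; first by rewrite mem_iota; lia.
  by rewrite subSS subn0.
have memI : forall l, l \in rho s (Inn K 1) -> l \in x.
  move=> l Hl; rewrite /x /level_word !mem_cat; apply/orP; right; apply/orP; right.
  apply/flatten_mapP; exists K; first by rewrite mem_iota; lia.
  by rewrite subSn // subnn.
have xne : x != [::].
  have : Neg (a + b) \in x.
    apply: memI; rewrite /= qnat_out1 -/a -/b /blk_bar -/c.
    apply/mapP; exists 0%N; first by rewrite mem_iota; lia.
    by rewrite subn0.
  by case: (x).
have [xne0 xall xcol xNz] : admissible n x.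
  by have := Hadm K.+1 ltac:(lia); rewrite /omega -/x (negbTE xne).
have memP : forall i, (1 <= i <= a)%N -> Pos i \in x.
  move=> i Hi.
  have yne : y != [::].
    have : Pos 1 \in y by rewrite /y /level_word mem_cat /= /blk mem_map ?mem_iota; [apply/orP; left; lia | by move=> ? ? [] ].
    by case: (y).
  move: Hpre; rewrite /omega -/x -/y (negbTE xne) (negbTE yne) /=.
  case=> Hsz Hle _.
  have sy : (a <= size y)%N.
    by rewrite /y /level_word size_cat /blk size_map size_iota; lia.
  have ny : forall j, (j < a)%N -> nth (Pos 0) y j = Pos j.+1.
    move=> j Hj; rewrite /y /level_word nth_cat /= /blk size_map size_iota Hj.
    by rewrite (nth_map 0%N) ?size_iota // nth_iota // add1n.
  have inC : forall j, (j < size x)%N -> in_Cn n (nth (Pos 0) x j).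
    by move=> j Hj; apply: (allP xall); apply: mem_nth.
  have claim : forall j, (j < a)%N -> nth (Pos 0) x j = Pos j.+1.
    elim=> [|j IH] Hj.
    - have := Hle 1%N ltac:(lia); rewrite /= ny //.
      have := inC 0%N ltac:(lia).
      case: (nth (Pos 0) x 0) => m /=; rewrite /lel ?eqPos ?eqNegPos //= => *; congr Pos; lia.
    - have := Hle j.+2 ltac:(lia); rewrite /= ny //.
      have := sorted_ltn_nth ltl_trans (Pos 0) xcol j j.+1.
      rewrite !inE IH; last lia.
      have h1 : (j < size x)%N by lia.
      have h2 : (j.+1 < size x)%N by lia.
      move=> /(_ h1 h2 (ltnSn j)).
      case: (nth (Pos 0) x j.+1) => m /=; rewrite /lel ?eqPos ?eqNegPos //= => *; congr Pos; lia.
  have -> : Pos i = nth (Pos 0) x i.-1 by rewrite claim; [congr Pos|]; lia.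
  apply: mem_nth; move: Hi Hsz sy; case: (i) => //= i0; lia.
set L := map Pos (iota 1 (a + b)) ++ map Neg (iota (a + b - c).+1 c).
have uL : uniq L.
  rewrite cat_uniq !map_inj_uniq ?iota_uniq; try by move=> ? ? [].
  rewrite /= andbT; apply/hasPn => l /mapP [j _ ->]; apply/mapP => -[m _]; done.
have := xNz (a + b)%N ltac:(lia).
rewrite /Nz -size_filter => H.
have : (size L <= size [seq x0 <- x | match x0 with
                                       | Pos i | Neg i => (i <= a + b)%N
                                       end])%N.
  apply: uniq_leq_size => // l; rewrite mem_filter mem_cat => /orP [] /mapP [j].
  - rewrite mem_iota => Hj ->; apply/andP; split; first by rewrite /=; lia.
    case: (leqP j a) => Hja; first by apply: memP; lia.
    apply: memO; rewrite /= qnat_root -/a -/b /blk_up mem_map ?mem_iota; first lia.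
    by move=> ? ? [].
  - rewrite mem_iota => Hj ->; apply/andP; split; first by rewrite /=; lia.
    apply: memI; rewrite /= qnat_out1 -/a -/b /blk_bar -/c.
    apply/mapP; exists (a + b - j)%N; first by rewrite mem_iota; lia.
    congr Neg; lia.
rewrite size_cat !size_map !size_iota; lia.
Qed.
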